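(* Let $p$ and $s$ be distinct odd primes and $n$ a positive integer with $p\equiv1\pmod n$. Let $g$ be a primitive root modulo $p$, $\zeta$ a primitive $p$-th root of unity in $\overline{\mathbb{F}}_s$, and $G(p,n)=\langle a,b\mid a^p=1=b^{(p-1)/n},\ b^{-1}ab=a^{g^n}\rangle$. Let $\rho:\langle a\rangle\to\overline{\mathbb{F}}_s^*$ be given by $\rho(a)=\zeta$. Then the induced representation $\rho^{G(p,n)}$ is realizable over $\mathbb{F}_s$ if and only if $s$ is an $n$-th power in $\mathbb{F}_p$ (i.e. $s\equiv y^n\pmod p$ for some integer $y$).
   Context: A representation over $\overline{\mathbb{F}}_s$ is realizable over $\mathbb{F}_s$ if it is equivalent (over $\overline{\mathbb{F}}_s$) to a matrix representation with all entries in $\mathbb{F}_s$. Concretely, with $N=(p-1)/n$, $\rho^{G(p,n)}$ acts on a space with basis $e_0,\dots,e_{N-1}$ by $ae_i=\zeta^{g^{ni}}e_i$, $be_i=e_{i+1}$ (indices modulo $N$). *)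

(* Defs.v *)
From HB Require Import structures.
From mathcomp Require Import all_boot all_order all_algebra all_field.
Set Implicit Arguments. Unset Strict Implicit. Unset Printing Implicit Defensive.
Import GRing.Theory.
Local Open Scope ring_scope.

(* Dimension N = (p-1)/n of the induced representation. *)
Definition indDim (p n : nat) : nat := (p.-1 %/ n)%N.

(* Image of a under rho^{G(p,n)}: e_i |-> zeta^(g^(n i)) e_i (diagonal). *)
Definition indA (F : fieldType) (p n g : nat) (zeta : F) : 'M[F]_(indDim p n) :=
  diag_mx (\row_(i < indDim p n) zeta ^+ (g ^ (n * i))).

(* Image of b: e_i |-> e_{i+1}, indices mod N (row-vector convention:
   e_i *m indB = e_{i+1}). *)
Definition indB (F : fieldType) (p n : nat) : 'M[F]_(indDim p n) :=
  \matrix_(i, j) ((nat_of_ord j == (i.+1 %% indDim p n)%N)%:R).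

(* x lies in the prime subfield F_s of F (image of the integers). *)
Definition in_prime_field (F : fieldType) (x : F) : Prop :=
  exists k : nat, x = k%:R.

Definition mx_over_prime_field (F : fieldType) (m : nat) (M : 'M[F]_m) : Prop :=
  forall i j, in_prime_field (M i j).

Definition realizable_over_prime_field (F : fieldType) (m : nat)
  (A B : 'M[F]_m) : Prop :=
  exists P : 'M[F]_m, P \in unitmx /\
    mx_over_prime_field (P *m A *m invmx P) /\
    mx_over_prime_field (P *m B *m invmx P).

(* Main.v *)
Require Import Defs.
From HB Require Import structures.
From mathcomp Require Import all_boot all_order all_algebra all_field all_fingroup.
Import GRing.Theory.
Local Open Scope ring_scope.
Lemma natr_inj_pchar (F : fieldType) s (chF : s \in [pchar F]) k l :
  (k < s)%N -> (l < s)%N -> (k%:R : F) = l%:R -> k = l.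
Proof.
wlog kl : k l / (k <= l)%N.
  move=> H ks ls E; case: (leqP k l) => [kl|lk]; first exact: H.
  by apply/esym/H => //; apply: ltnW.
move=> ks ls E; apply/eqP; rewrite eqn_leq kl /=.
have : (l - k)%:R == 0 :> F by rewrite natrB // E subrr.
rewrite -(dvdn_pcharf chF) => dv.
case: (posnP (l - k)) => [|lk0]; first by move/eqP; rewrite subn_eq0.
have := dvdn_leq lk0 dv.
have := leq_ltn_trans (leq_subr k l) ls.
by rewrite ltnNge => /negbTE ->.
Qed.

Lemma fixed_prime (F : fieldType) s (chF : s \in [pchar F]) (x : F) :
  x ^+ s = x -> in_prime_field x.
Proof.
move=> xs.
have s1 : (1 < s)%N by apply: prime_gt1; apply: (pcharf_prime chF).
pose rs := [seq (k%:R : F) | k <- iota 0 s].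
case xin: (x \in rs).
  by case/mapP: xin => k _ ->; exists k.
pose q : {poly F} := 'X^s - 'X.
have szq : size q = s.+1.
  rewrite /q size_addl ?size_polyXn // size_opp size_polyX ltnS //.
have q0 : q != 0 by rewrite -size_poly_eq0 szq.
have := @max_poly_roots _ q (x :: rs) q0.
rewrite szq /= size_map size_iota ltnn.
have -> : root q x && all (root q) rs.
  apply/andP; split.
    by rewrite /root /q !hornerE xs subrr.
  apply/allP => _ /mapP[k _ ->].
  rewrite /root /q !hornerE.
  have := pFrobenius_aut_nat chF k; rewrite pFrobenius_autE => ->.
  by rewrite subrr.
rewrite xin /= map_inj_in_uniq ?iota_uniq.
  by move=> /(_ isT isT).
move=> k l; rewrite !mem_iota /= !add0n; exact: natr_inj_pchar.
Qed.
Lemma conj_fixed (F : fieldType) (fr : {rmorphism F -> F}) N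
  (P M Pi : 'M[F]_N) : P \in unitmx ->
  map_mx fr P = P *m Pi ->
  Pi *m map_mx fr M = M *m Pi ->
  map_mx fr (P *m M *m invmx P) = P *m M *m invmx P.
Proof.
move=> uP eP eM.
have uX : P *m Pi \in unitmx by rewrite -eP map_unitmx.
rewrite -[LHS](mulmxK uX) -[RHS](mulmxK uX); congr (_ *m _).
rewrite !map_mxM map_invmx -eP mulmxKV ?map_unitmx //.
rewrite eP -mulmxA eM mulmxA mulmxA (mulmxKV uP).
by [].
Qed.

Lemma zFp (F : fieldType) p (zeta : F) : prime p -> p.-primitive_root zeta ->
  forall a b : nat, (zeta ^+ a == zeta ^+ b) = ((a%:R : 'F_p) == b%:R).
Proof.
move=> pp pz a b; rewrite (eq_prim_root_expr pz).
apply/idP/idP => [/eqP h | /eqP h].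
  by rewrite -Fp_nat_mod // h Fp_nat_mod.
by apply/eqP; move: (congr1 (fun x : 'F_p => nat_of_ord x) h); rewrite /= !val_Fp_nat.
Qed.

Lemma ordSX N (i : 'I_N) k :
  val (((perm (@ordS_inj N)) ^+ k)%g i) = ((i + k) %% N)%N.
Proof.
rewrite permX; elim: k => [|k IH] /=.
  by rewrite addn0 modn_small.
rewrite permE /= IH.
by rewrite -addn1 modnDml addn1 addnS.
Qed.

Theorem mainTheorem11 (p s n g : nat) (F : closedFieldType) (zeta : F) :
  prime p -> prime s -> odd p -> odd s -> p != s ->
  (0 < n)%N -> p = 1 %[mod n] ->
  (p.-1).-primitive_root (g%:R : 'F_p) ->
  s \in [pchar F] ->
  p.-primitive_root zeta ->
  realizable_over_prime_field (indA p n g zeta) (indB F p n) <->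
  (exists y : nat, s = y ^ n %[mod p]).
Proof.
move=> pp ps op os pns n0 pmod prim chF pz.
set N := indDim p n.
have p1 : (1 < p)%N by apply: prime_gt1.
have hdiv : (n %| p.-1)%N.
  by rewrite -subn1 -eqn_mod_dvd ?(ltnW p1) //; apply/eqP.
have hnN : (n * N = p.-1)%N by rewrite mulnC divnK.
have N0 : (0 < N)%N.
  rewrite lt0n; apply/eqP => N0; move: hnN; rewrite N0 muln0 => /esym.
  by move/eqP; rewrite -subn1 subn_eq0 leqNgt p1.
set G : 'F_p := g%:R.
have eF := @zFp _ _ _ pp pz.
have Gmod : forall m, G ^+ (n * (m %% N)) = G ^+ (n * m).
  by move=> m; rewrite muln_modr hnN prim_expr_mod.
set r := \row_(i < N) zeta ^+ (g ^ (n * i)).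
have eA : indA p n g zeta = diag_mx r by [].
set fr := pFrobenius_aut chF.
split.
- case=> P [uP [hA hB]].
  have fixd : map_mx fr (P *m diag_mx r *m invmx P) = P *m diag_mx r *m invmx P.
    apply/matrixP => a b; rewrite mxE; have [k ->] := hA a b.
    by rewrite /fr pFrobenius_aut_nat.
  have uPf : map_mx fr P \in unitmx by rewrite map_unitmx.
  have E : map_mx fr P *m map_mx fr (diag_mx r) *m invmx (map_mx fr P)
         = P *m diag_mx r *m invmx P.
    by rewrite -[RHS]fixd !map_mxM map_invmx.
  have EA : P *m diag_mx r = map_mx fr P *m map_mx fr (diag_mx r) *m invmx (map_mx fr P) *m P.
    by rewrite E mulmxKV.
  pose i0 : 'I_N := Ordinal N0.
  pose v : 'rV[F]_N := delta_mx 0 i0.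
  have ev : v *m map_mx fr (diag_mx r) = (zeta ^+ s) *: v.
    rewrite map_diag_mx mul_mx_diag; apply/matrixP => a b; rewrite !mxE.
    case: (eqVneq b i0) => [->|nb]; last by rewrite andbF mulr0n mul0r mulr0.
    rewrite ord1 andbT eqxx mulr1 mul1r.
    have -> : (g ^ (n * i0))%N = 1%N by rewrite /= muln0.
    by rewrite expr1.
  pose w := v *m invmx (map_mx fr P) *m P.
  have ew : w *m diag_mx r = (zeta ^+ s) *: w.
    rewrite /w -mulmxA EA !mulmxA -(mulmxA v) (mulVmx uPf) mulmx1 ev.
    by rewrite -!scalemxAl.
  have wn0 : w != 0.
    apply/eqP => w0.
    have : v = w *m invmx P *m map_mx fr P.
      by rewrite /w (mulmxK uP) (mulmxKV uPf).
    rewrite w0 !mul0mx => /matrixP/(_ 0 i0); rewrite !mxE !eqxx /=.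
    by move/eqP; rewrite oner_eq0.
  have [j wj] : exists j, w 0 j != 0.
    case: (pickP (fun j => w 0 j != 0)) => [j wj|none]; first by exists j.
    move: wn0; case/negP; apply/eqP/matrixP => a b.
    by rewrite ord1 (eqP (negbFE (none b))) mxE.
  clearbody w.
  have := congr1 (fun M : 'rV[F]_N => M 0 j) ew; rewrite /= mul_mx_diag !mxE.
  rewrite [RHS]mulrC => /(mulfI wj) /eqP; rewrite eF => /eqP h.
  exists (g ^ j)%N; rewrite -expnM mulnC.
  move: (congr1 (fun x : 'F_p => nat_of_ord x) h); rewrite /= !val_Fp_nat //.
- case=> y hy.
  have hsy : (s%:R : 'F_p) = (y%:R) ^+ n.
    by rewrite -natrX -Fp_nat_mod // hy Fp_nat_mod.
  have y0 : (y%:R : 'F_p) != 0.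
    apply/eqP => y0; move: hsy; rewrite y0 expr0n eqn0Ngt n0 /= => hs0.
    have : (s %% p = 0)%N.
      by move: (congr1 (fun x : 'F_p => nat_of_ord x) hs0); rewrite /= val_Fp_nat.
    move/eqP; rewrite -/(dvdn p s) dvdn_prime2 // => /eqP eps.
    by move: pns; rewrite eps eqxx.
  have yp : (y%:R : 'F_p) ^+ p.-1 = 1.
    have := expf_card (y%:R : 'F_p); rewrite card_Fp // => e.
    by apply: (mulfI y0); rewrite mulr1 -exprS prednK ?e // ltnW.
  have [j hj] := prim_rootP prim yp.
  pose k := (j %% N)%N.
  have kN : (k < N)%N by rewrite ltn_pmod.
  have hsG : (s%:R : 'F_p) = G ^+ (n * k).
    by rewrite hsy hj -exprM mulnC Gmod.
  pose tau := perm (@ordS_inj N).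
  pose sig := (tau ^+ k)%g.
  have key : forall i : 'I_N, (zeta ^+ (g ^ (n * i))) ^+ s = zeta ^+ (g ^ (n * sig i)).
    move=> i; rewrite -exprM; apply/eqP; rewrite eF natrM !natrX -/G ordSX Gmod.
    by rewrite mulnDr exprD -hsG.
  pose P := Vandermonde N r.
  pose Pi := perm_mx (sig^-1)%g : 'M[F]_N.
  have uP : P \in unitmx.
    rewrite unitmxE det_Vandermonde unitfE; apply/prodf_neq0 => i0 _.
    apply/prodf_neq0 => j0 ij; rewrite subr_eq0 !mxE eF !natrX -/G.
    rewrite (eq_prim_root_expr prim) -hnN -!muln_modr eqn_pmul2l //.
    by rewrite !modn_small // gtn_eqF.
  have eP : map_mx fr P = P *m Pi.
    rewrite /Pi -col_permE; apply/matrixP => a b; rewrite !mxE.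
    by rewrite /fr pFrobenius_autE -exprM [(a * s)%N]mulnC exprM key.
  have eAm : Pi *m map_mx fr (diag_mx r) = diag_mx r *m Pi.
    rewrite map_diag_mx mul_mx_diag mul_diag_mx; apply/matrixP => a b.
    rewrite /Pi /perm_mx !mxE.
    case: eqP => [<-|_]; last by rewrite mulr0n mul0r mulr0.
    by rewrite mulr1 mul1r -{2}(permKV sig a) -key.
  have eBt : indB F p n = perm_mx tau.
    apply/matrixP => a b; rewrite /perm_mx !mxE permE.
    by rewrite eq_sym.
  have eBm : Pi *m map_mx fr (indB F p n) = indB F p n *m Pi.
    have -> : map_mx fr (indB F p n) = indB F p n.
      by apply/matrixP => a b; rewrite !mxE /fr pFrobenius_aut_nat.
    have c : commute tau (sig^-1)%g := commuteV (commuteX k (commute_refl tau)).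
    by rewrite eBt /Pi -!perm_mxM c.
  exists P; split => //.
  have fixd : forall M : 'M[F]_N, Pi *m map_mx fr M = M *m Pi ->
      mx_over_prime_field (P *m M *m invmx P).
    move=> M eM i1 j1; apply: (@fixed_prime _ _ chF).
    have := @conj_fixed _ (pFrobenius_aut chF) _ _ _ _ uP eP eM.
    by move/matrixP/(_ i1 j1); rewrite mxE.
  by split; apply: fixd.
Qed.
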